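(* Let $M,N\ge3$ be integers with $M$ divisible by $(7^{N+1})!$. For $1\le i\le N$ let $\theta_i=\frac1{7^i}$, let $\mu=\frac1{7^N}$ and $\Theta_k=\sum_{i=k}^N\theta_i$. For $1\le k\le N$ let $I_k$ be the sequence consisting of $N-k+1$ batches of $M$ identical items each, where the batches have item sizes $\theta_N,\theta_{N-1},\dots,\theta_k$ in this order. Then $\mathrm{OPT}(I_k)=\frac{M\,\Theta_k}{1-\mu+\theta_k}$ for every $1\le k\le N$.
   Context: Ordered Open End Bin Packing: a sequence of items with sizes in $(0,1]$ must be packed into bins in sequence order, where an item may be added to a bin only if the bin's current total size is strictly below $1$; equivalently, in each bin the total size of all items except the one appearing last in the sequence is strictly below $1$. $\mathrm{OPT}(I)$ is the minimum number of bins of such a packing of the sequence $I$. *)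

(* Defs.v *)
From mathcomp Require Import all_boot all_order all_algebra.
Set Implicit Arguments. Unset Strict Implicit. Unset Printing Implicit Defensive.
Import Order.TTheory GRing.Theory Num.Theory.
Local Open Scope ring_scope.

(* An instance is a sequence of item sizes s = [:: s_0; ...; s_(n-1)].
   A packing assigns to each item index i < size s a bin label f i : nat. *)

Definition load_before (s : seq rat) (f : nat -> nat) (b j : nat) : rat :=
  \sum_(0 <= i < j | f i == b) s`_i.

(* Ordered open end packing: in each bin, the total size of all items except
   the one appearing last in the sequence is strictly below 1. *)
Definition oe_packing (s : seq rat) (f : nat -> nat) : Prop :=
  forall j : nat, (j < size s)%N ->
    (forall i : nat, (j < i)%N -> (i < size s)%N -> f i != f j) ->
    load_before s f (f j) j < 1.

Definition nbins (s : seq rat) (f : nat -> nat) : nat :=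
  size (undup [seq f i | i <- iota 0 (size s)]).

Definition is_OPT (s : seq rat) (m : nat) : Prop :=
  (exists f, oe_packing s f /\ nbins s f = m) /\
  (forall f, oe_packing s f -> (m <= nbins s f)%N).

Definition theta (i : nat) : rat := (7%:R ^+ i)^-1.
Definition Theta (N k : nat) : rat := \sum_(k <= i < N.+1) theta i.

Definition instI (M N k : nat) : seq rat :=
  flatten [seq nseq M (theta i) | i <- rev (iota k (N - k).+1)].

(* Main.v *)
Require Import Defs.
From mathcomp Require Import all_boot all_order all_algebra.
From mathcomp Require Import zify ring lra.
Import Order.TTheory GRing.Theory Num.Theory.

Lemma count_interval (P : pred nat) m lo hi :
  (forall r, r < m -> P r -> lo <= r < hi) ->
  \sum_(0 <= r < m) (P r : nat) <= hi - lo.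
Proof.
move=> H.
suff: \sum_(0 <= r < m) (P r : nat) <= minn m hi - lo by move=> h; lia.
elim: m H => [|m IH] H; first by rewrite big_geq.
rewrite big_nat_recr //=.
have IH' := IH (fun r hr => H r (leq_trans hr (leqnSn _))).
case Pm: (P m) => /=.
  have := H m (ltnSn _) Pm; lia.
lia.
Qed.

Lemma sum_shift (F : nat -> nat) a b :
  \sum_(a <= i < a + b) F i = \sum_(0 <= r < b) F (a + r).
Proof.
have -> : \sum_(a <= i < a + b) F i = \sum_(0 + a <= i < a + b) F i by [].
rewrite big_addn addKn.
by apply: eq_bigr => r _; rewrite addnC.
Qed.

Lemma sum_split_at (F : nat -> nat) a b :
  \sum_(0 <= i < a + b) F i = \sum_(0 <= i < a) F i + \sum_(0 <= r < b) F (a + r).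
Proof.
rewrite (@big_cat_nat _ _ _ a) //=; last by rewrite leq_addr.
by rewrite sum_shift.
Qed.

Lemma sum_levels (F : nat -> nat) M e :
  \sum_(0 <= i < e * M) F i = \sum_(0 <= t < e) \sum_(0 <= r < M) F (t * M + r).
Proof.
elim: e => [|e IH]; first by rewrite mul0n !big_geq.
by rewrite big_nat_recr //= -IH mulSnr sum_split_at.
Qed.

Lemma prod_dvd_fact n (l : seq nat) :
  uniq l -> all (fun x => 0 < x <= n) l -> \prod_(x <- l) x %| n`!.
Proof.
elim: n l => [|n IH] l ul al.
  case: l ul al => [|x l]; first by rewrite big_nil. move=> _ /= /andP[h _]; lia.
case: (boolP (n.+1 \in l)) => hin.
  rewrite (perm_big _ (perm_to_rem hin)) big_cons factS dvdn_mul //.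
  apply: IH; first exact: rem_uniq.
  apply/allP => x; rewrite (mem_rem_uniq _ ul) => /andP[/= xn xl].
  have := allP al x xl => /= ; lia.
rewrite factS dvdn_mull //; apply: IH => //.
apply/allP => x xl; have := allP al x xl => /=.
have : x != n.+1 by apply: contraNneq hin => <-.
lia.
Qed.

Lemma partition_sum (f : nat -> nat) (F : nat -> nat) (r : seq nat) :
  \sum_(i <- r) F i = \sum_(b <- undup (map f r)) \sum_(i <- r | f i == b) F i.
Proof.
symmetry.
rewrite (exchange_big_dep predT) //=.
rewrite [RHS]big_seq_cond [LHS]big_seq_cond.
apply: eq_bigr => i /andP[ir _].
have hin : f i \in undup (map f r) by rewrite mem_undup; apply: map_f.
rewrite (perm_big _ (perm_to_rem hin)) big_cons eqxx /=.
rewrite big1_seq ?addn0 // => b /andP[/eqP hb]; rewrite (mem_rem_uniq _ (undup_uniq _)) /=.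
by rewrite -hb inE eqxx.
Qed.


Lemma core_ids A c S' : 6 <= c -> A = 6 * S' + 1 ->
  [/\ 6 * (S' + A) + A * (c - 5) = A * (c + 1) - 1 + A,
      S' + A <= A * (c + 1) - 1 + A &
      (c - 5) * S' + (A * (c + 1) - 1 + A - (S' + A)) = c * (S' + A)].
Proof. move=> hc hA; split; nia. Qed.

Definition A7 N k := 7 ^ (N - k).
Definition cc k := 7 ^ k - 1.
Definition S7 e := \sum_(0 <= t < e) 7 ^ t.
Definition Yv N k := 7 ^ N - 1 + A7 N k.
Definition pp M N k := M %/ (Yv N k * cc k * A7 N k).
Definition Bv M N k := pp M N k * cc k * A7 N k * S7 (N - k).+1.
Definition Pt M N k t := pp M N k * A7 N k * (cc k - 5) * S7 t.
Definition Gt N k t := cc k * 7 ^ (N - k - t).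
Definition glow M N k t r :=
  if r < 6 * Bv M N k then r %/ 6 else Pt M N k t + (r - 6 * Bv M N k) %/ Gt N k t.
Definition gtop M N k r :=
  if r < M - Bv M N k then Pt M N k (N - k) + r %/ cc k else r - (M - Bv M N k).
Definition fpack M N k i :=
  if i %/ M < N - k then glow M N k (i %/ M) (i %% M) else gtop M N k (i %% M).

Lemma S7S e : S7 e.+1 = S7 e + 7 ^ e.
Proof. by rewrite /S7 big_nat_recr. Qed.

Lemma S6 e : 6 * S7 e + 1 = 7 ^ e.
Proof.
elim: e => [|e IH]; first by rewrite /S7 big_geq.
rewrite S7S expnS; lia.
Qed.

Lemma S7_mono a b : a <= b -> S7 a <= S7 b.
Proof.
move=> h; rewrite /S7 (@big_cat_nat _ _ _ a 0 b) //=; exact: leq_addr.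
Qed.

Section Arith.
End Arith.

Lemma dm_lvl M t r : 0 < M -> r < M -> (t * M + r) %/ M = t /\ (t * M + r) %% M = r.
Proof.
move=> hM hr; split; first by rewrite divnMDl // divn_small // addn0.
by rewrite modnMDl modn_small.
Qed.

Record hyps M N k : Prop := Hyps {
  hM : 0 < M; hk1 : 1 <= k; hkN : k <= N;
  hdiv : Yv N k * cc k * A7 N k %| M }.

Lemma facts M N k : hyps M N k ->
  let p := pp M N k in let A := A7 N k in let c := cc k in
  let S := S7 (N - k).+1 in let Y := Yv N k in let B := Bv M N k in
  [/\ 6 <= c, 7 ^ N = A * (c + 1), Y = A * (c + 1) - 1 + A, M = p * (Y * c * A)
    & [/\ 6 * B + p * c * A * (A * (c - 5)) = M,
          B + c * (p * A * (Y - S)) = M,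
          Pt M N k (N - k) + p * A * (Y - S) = B,
          B * Y = M * S &
          forall t, t < N - k -> Gt N k t * (p * A * (c - 5) * 7 ^ t) = p * c * A * (A * (c - 5))]].
Proof.
case=> hM hk1 hkN hdiv p A c S Y B.
have hc : 6 <= c.
  rewrite /c /cc; have : 7 ^ 1 <= 7 ^ k by rewrite leq_exp2l.
  lia.
have h7N : 7 ^ N = A * (c + 1).
  rewrite /A /A7 /c /cc subnK ?expn_gt0 // -expnD subnK //.
have hY : Y = A * (c + 1) - 1 + A by rewrite /Y /Yv h7N.
have hMp : M = p * (Y * c * A) by rewrite /p /pp divnK.
have hA : A = 6 * S7 (N - k) + 1 by rewrite S6.
have hS : S = S7 (N - k) + A by rewrite /S S7S.
have [c1 c2 c3] := @core_ids A c (S7 (N - k)) hc hA.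
have hB : B = p * c * A * S by [].
split => //; split.
- rewrite [RHS]hMp hB hY -c1 hS; ring.
- rewrite [RHS]hMp hB.
  have hSY : S <= Y by rewrite hY hS.
  rewrite -[X in p * (X * c * A)](subnKC hSY); ring.
- rewrite /Pt -/p -/A -/c hB.
  have e3 : (c - 5) * S7 (N - k) + (Y - S) = c * S by rewrite hS hY.
  transitivity (p * A * ((c - 5) * S7 (N - k) + (Y - S))); first ring.
  rewrite e3; ring.
- rewrite hB hMp; ring.
- move=> t ht; rewrite /Gt -/c.
  have -> : A = 7 ^ (N - k - t) * 7 ^ t by rewrite -expnD subnK // ltnW.
  ring.
Qed.

Lemma Pt_step M N k t : Pt M N k t.+1 = Pt M N k t + pp M N k * A7 N k * (cc k - 5) * 7 ^ t.
Proof. by rewrite /Pt S7S mulnDr. Qed.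

Lemma Pt_mono M N k a b : a <= b -> Pt M N k a <= Pt M N k b.
Proof. by move=> h; rewrite /Pt leq_mul2l S7_mono ?orbT. Qed.

Lemma sum_le0 m (P : pred nat) : (forall r, r < m -> ~~ P r) -> \sum_(0 <= r < m) (P r : nat) <= 0.
Proof.
move=> h; have := @count_interval P m 0 0; rewrite subnn; apply => r hr Pr.
by have := h r hr; rewrite Pr.
Qed.

Lemma div_bounds r G q : 0 < G -> r %/ G = q -> q * G <= r < q * G + G.
Proof.
move=> hG <-; have := divn_eq r G; have := ltn_pmod r hG.
move: (r %/ G) (r %% G) => a m; lia.
Qed.

Lemma cnt_low M N k t b : hyps M N k -> t < N - k ->
  \sum_(0 <= r < M) (glow M N k t r == b : nat) <=
  6 + ((Pt M N k t <= b < Pt M N k t.+1) : nat) * Gt N k t.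
Proof.
move=> H ht.
have [hc h7N hY hMp [f2 f3 f4 f7 f5]] := @facts M N k H.
have hG : 0 < Gt N k t by rewrite /Gt muln_gt0 expn_gt0; lia.
rewrite [X in X <= _](_ : _ = \sum_(0 <= r < 6 * Bv M N k +
   pp M N k * cc k * A7 N k * (A7 N k * (cc k - 5))) (glow M N k t r == b : nat)); last by rewrite f2.
rewrite sum_split_at leq_add //.
  have := @count_interval (fun r => glow M N k t r == b) (6 * Bv M N k) (6 * b) (6 * b + 6).
  rewrite addKn; apply => r hr; rewrite /glow hr => /eqP <-; lia.
have hsh : forall r, glow M N k t (6 * Bv M N k + r) = Pt M N k t + r %/ Gt N k t.
  by move=> r; rewrite /glow ltnNge leq_addr /= addKn.
have hK := f5 t ht.
rewrite Pt_step.
case: (boolP (Pt M N k t <= b < Pt M N k t + pp M N k * A7 N k * (cc k - 5) * 7 ^ t)) => hb /=.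
  rewrite mul1n.
  have := @count_interval (fun r => glow M N k t (6 * Bv M N k + r) == b) 
     (pp M N k * cc k * A7 N k * (A7 N k * (cc k - 5))) ((b - Pt M N k t) * Gt N k t) ((b - Pt M N k t) * Gt N k t + Gt N k t).
  rewrite addKn; apply => r hr; rewrite hsh => /eqP hr2.
  have hq : r %/ Gt N k t = b - Pt M N k t by rewrite -hr2 addKn.
  exact: div_bounds hG hq.
rewrite mul0n; apply: sum_le0 => r hr; rewrite hsh; apply/negP => /eqP hr2.
move: hr; rewrite -hK => hr.
have : r %/ Gt N k t < pp M N k * A7 N k * (cc k - 5) * 7 ^ t by rewrite ltn_divLR // mulnC.
move: hb hr2; move: (r %/ Gt N k t) => q; lia.
Qed.

Lemma cnt_top M N k b : hyps M N k ->
  \sum_(0 <= r < M - Bv M N k) (Pt M N k (N - k) + r %/ cc k == b : nat) <=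
  ((Pt M N k (N - k) <= b) : nat) * cc k.
Proof.
move=> H.
have [hc h7N hY hMp [f2 f3 f4 f7 f5]] := @facts M N k H.
case: (boolP (Pt M N k (N - k) <= b)) => hb /=.
  rewrite mul1n.
  have := @count_interval (fun r => Pt M N k (N - k) + r %/ cc k == b) (M - Bv M N k)
     ((b - Pt M N k (N - k)) * cc k) ((b - Pt M N k (N - k)) * cc k + cc k).
  rewrite addKn; apply => r hr /eqP hr2.
  have hq : r %/ cc k = b - Pt M N k (N - k) by rewrite -hr2 addKn.
  apply: div_bounds hq; lia.
rewrite mul0n; apply: sum_le0 => r hr; apply/negP => /eqP hr2; move: hb hr2; move: (r %/ cc k) => q; lia.
Qed.

Lemma telescope (P : nat -> nat) b e : (forall t, P t <= P t.+1) ->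
  \sum_(0 <= t < e) ((P t <= b < P t.+1) : nat) + ((P e <= b) : nat) <= 1.
Proof.
move=> hP; elim: e => [|e IH]; first by rewrite big_geq // add0n leq_b1.
rewrite big_nat_recr //=.
have := hP e.
case: (leqP (P e) b) => h1; case: (leqP (P e.+1) b) => h2 /=; move: IH; rewrite ?h1 ?h2 /=; lia.
Qed.

Lemma bin_bound M N k b : hyps M N k ->
  \sum_(0 <= i < (N - k) * M + (M - Bv M N k) | fpack M N k i == b) 7 ^ (i %/ M) <= 7 ^ N - 1.
Proof.
move=> H.
have [hc h7N hY hMp [f2 f3 f4 f7 f5]] := @facts M N k H.
have hM := @hM M N k H.
rewrite big_mkcond /=.
rewrite (eq_bigr (fun i => (fpack M N k i == b) * 7 ^ (i %/ M))); last first.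
  by move=> i _; case: (_ == _); rewrite ?mul1n ?mul0n.
rewrite sum_split_at sum_levels.
set A := A7 N k; set c := cc k.
have e1 : \sum_(0 <= t < N - k) \sum_(0 <= r < M) (fpack M N k (t * M + r) == b) * 7 ^ ((t * M + r) %/ M)
   = \sum_(0 <= t < N - k) 7 ^ t * \sum_(0 <= r < M) (glow M N k t r == b : nat).
  apply: eq_big_nat => t /andP[_ ht]; rewrite big_distrr /=.
  apply: eq_big_nat => r /andP[_ hr].
  have [d1 d2] := @dm_lvl M t r hM hr.
  by rewrite /fpack d1 d2 ht mulnC.
have e2 : \sum_(0 <= r < M - Bv M N k) (fpack M N k ((N - k) * M + r) == b) * 7 ^ (((N - k) * M + r) %/ M)
   = A * \sum_(0 <= r < M - Bv M N k) (Pt M N k (N - k) + r %/ c == b : nat).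
  rewrite big_distrr /=; apply: eq_big_nat => r /andP[_ hr].
  have hrM : r < M by lia.
  have [d1 d2] := @dm_lvl M (N - k) r hM hrM.
  by rewrite /fpack d1 d2 ltnn /gtop hr mulnC.
rewrite e1 e2.
have b1 : \sum_(0 <= t < N - k) 7 ^ t * \sum_(0 <= r < M) (glow M N k t r == b : nat) <=
   \sum_(0 <= t < N - k) (6 * 7 ^ t + ((Pt M N k t <= b < Pt M N k t.+1) : nat) * (c * A)).
  rewrite big_nat_cond [X in _ <= X]big_nat_cond; apply: leq_sum => t /andP[/andP[_ ht] _].
  have := @cnt_low M N k t b H ht => h.
  apply: leq_trans (leq_mul (leqnn (7 ^ t)) h) _.
  rewrite mulnDr mulnCA; apply: leq_add; first by rewrite mulnC.
  rewrite leq_mul2l; apply/orP; right.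
  rewrite /Gt -/c /A /A7 mulnCA -expnD subnKC //; exact: ltnW.
have b2 := leq_mul (leqnn A) (@cnt_top M N k b H).
have tel := @telescope (Pt M N k) b (N - k) (fun t => @Pt_mono M N k t t.+1 (leqnSn t)).
rewrite big_split /= -big_distrl /= in b1.
have hS := S6 (N - k).
rewrite -/(S7 (N - k)) in b1.
have hA : A = 7 ^ (N - k) by [].
move: b1 b2 tel hS; rewrite -hA h7N.
set X := \sum_(0 <= t < N - k) _.
set Z := nat_of_bool _.
set U := \sum_(0 <= t < N - k) _.
set V := \sum_(0 <= r < M - Bv M N k) _.
move=> b1 b2 tel hS.
rewrite -/c -/A in b2 *.
have hU : U = 6 * S7 (N - k) by rewrite /U /S7 big_distrr.
move: b1 tel; set W := \sum_(0 <= i < N - k) _ => b1 tel.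
have hm : W * (c * A) + A * (Z * c) <= c * A.
  have := leq_mul tel (leqnn (c * A)).
  have -> : (W + Z) * (c * A) = W * (c * A) + A * (Z * c) by ring.
  by rewrite mul1n.
have hAc : A * (c + 1) = c * A + A by ring.
lia.
Qed.

Lemma labels_lt M N k i : hyps M N k -> i < (N - k).+1 * M -> fpack M N k i < Bv M N k.
Proof.
move=> H hi.
have [hc h7N hY hMp [f2 f3 f4 f7 f5]] := @facts M N k H.
have hM := @hM M N k H.
have hr : i %% M < M by rewrite ltn_pmod.
have ht : i %/ M <= N - k by rewrite -ltnS ltn_divLR.
rewrite /fpack; case: ifP => htl.
  rewrite /glow; case: ifP => h6; first lia.
  have hK := f5 _ htl.
  have hG : 0 < Gt N k (i %/ M) by rewrite /Gt muln_gt0 expn_gt0; lia.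
  have hq : (i %% M - 6 * Bv M N k) %/ Gt N k (i %/ M) <
        pp M N k * A7 N k * (cc k - 5) * 7 ^ (i %/ M).
    rewrite ltn_divLR //; rewrite (etrans (mulnC _ _) hK); lia.
  have := Pt_step M N k (i %/ M).
  have := @Pt_mono M N k (i %/ M).+1 (N - k) htl.
  move: hq f4; move: (_ %/ Gt N k _) => q; move: (i %/ M) => t.
  move: (Pt M N k t) (Pt M N k t.+1) (Pt M N k (N - k)) => a1 a2 a3.
  move: (pp M N k * A7 N k * (cc k - 5) * 7 ^ t) (pp M N k * A7 N k * (Yv N k - S7 (N - k).+1)) => K z; lia.
rewrite /gtop; case: ifP => hB; last lia.
have hc0 : 0 < cc k by lia.
have : i %% M %/ cc k < pp M N k * A7 N k * (Yv N k - S7 (N - k).+1).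
  rewrite ltn_divLR //; move: f3 hB.
  move: (pp M N k * A7 N k * (Yv N k - S7 (N - k).+1)) => z; lia.
move: f4; move: (_ %/ cc k) => q; lia.
Qed.

Lemma divn_btw i M e : 0 < M -> e * M <= i < e * M + M -> i %/ M = e.
Proof. move=> hM h; nia. Qed.

Lemma closer_f M N k i : hyps M N k ->
  (N - k) * M + (M - Bv M N k) <= i < (N - k).+1 * M ->
  fpack M N k i = i - ((N - k) * M + (M - Bv M N k)).
Proof.
move=> H /andP[h1 h2].
have [hc h7N hY hMp [f2 f3 f4 f7 f5]] := @facts M N k H.
have hM := @hM M N k H.
have ht : i %/ M = N - k.
  apply: divn_btw => //; move: h1 h2; rewrite mulSnr; lia.
have hr : i %% M = i - (N - k) * M.
  have := divn_eq i M; rewrite ht; lia.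
rewrite /fpack ht ltnn /gtop hr.
have -> : (i - (N - k) * M < M - Bv M N k) = false by lia.
lia.
Qed.


Lemma divn_between i M e : 0 < M -> e * M <= i < e * M + M -> i %/ M = e.
Proof. move=> hM h; nia. Qed.

Lemma flat_eq M k e : 0 < M ->
  flatten [seq nseq M (theta i) | i <- rev (iota k e)] =
  mkseq (fun p => theta (k + e.-1 - p %/ M)) (e * M).
Proof.
move=> hM; elim: e k => [|e IH] k; first by rewrite mul0n.
rewrite /= rev_cons map_rcons -cats1 flatten_cat IH /= cats0.
apply: (@eq_from_nth _ 0%R).
  by rewrite size_cat size_nseq !size_mkseq mulSnr.
move=> i; rewrite size_cat size_mkseq size_nseq => hi.
rewrite nth_cat size_mkseq [in RHS]nth_mkseq; last by rewrite mulSnr.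
case: ifP => h.
  rewrite nth_mkseq //; congr theta.
  case: e IH hi h => [|e] IH hi h; first by rewrite mul0n in h.
  by rewrite /= addSnnS.
rewrite nth_nseq; have -> : i - e * M < M by lia.
rewrite (@divn_between i M e) //; last by lia.
by rewrite addnK.
Qed.

Lemma instI_eq M N k : 0 < M ->
  instI M N k = mkseq (fun p => theta (k + (N - k) - p %/ M)) ((N - k).+1 * M).
Proof. by move=> hM; rewrite /instI flat_eq. Qed.

Lemma size_instI M N k : 0 < M -> size (instI M N k) = (N - k).+1 * M.
Proof. by move=> hM; rewrite instI_eq // size_mkseq. Qed.



Lemma hyps_of M N k : 3 <= M -> 3 <= N -> (7 ^ N.+1)`! %| M -> 1 <= k -> k <= N -> hyps M N k.
Proof.
move=> hM3 hN3 hf hk1 hkN; split => //; first lia.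
apply: dvdn_trans hf.
have -> : Yv N k * cc k * A7 N k = \prod_(x <- [:: Yv N k; cc k; A7 N k]) x.
  by rewrite !big_cons big_nil muln1 mulnA.
have h7k : 7 <= 7 ^ k by have := @leq_exp2l 7 1 k isT; rewrite expn1 => ->.
have hkN' : 7 ^ k <= 7 ^ N by rewrite leq_exp2l.
have hA : 7 ^ (N - k) <= 7 ^ N by rewrite leq_exp2l // leq_subr.
have hA0 : 0 < 7 ^ (N - k) by rewrite expn_gt0.
have h7N : 7 ^ N.+1 = 7 * 7 ^ N by rewrite expnS.
apply: prod_dvd_fact.
  rewrite /= !inE /Yv /cc /A7 !negb_or.
  have hodd : (7 ^ k - 1 == 7 ^ (N - k)) = false.
    apply/negbTE/negP => /eqP h.
    have := congr1 odd h; rewrite oddX oddB ?expn_gt0 // oddX /=.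
    by rewrite orbT addbb orbT.
  rewrite hodd andbT; apply/andP; split; apply/negP => /eqP; lia.
rewrite /= /Yv /cc /A7 h7N; lia.
Qed.


Local Open Scope ring_scope.


Lemma theta_eq N t : (t <= N)%N -> theta (N - t) = (7 ^ t)%:R / (7 ^ N)%:R.
Proof.
move=> h; rewrite /theta !natrX.
rewrite -{2}(subnK h) exprD.
have h7 : (7%:R : rat) != 0 by [].
by rewrite invfM mulrCA mulfV ?mulr1 // expf_neq0.
Qed.

Lemma nth_instI M N k i : (0 < M)%N -> (k <= N)%N -> (i < (N - k).+1 * M)%N ->
  (instI M N k)`_i = (7 ^ (i %/ M))%:R / (7 ^ N)%:R.
Proof.
move=> hM hk hi; rewrite instI_eq // nth_mkseq // subnKC //.
apply: theta_eq.
have : (i %/ M < (N - k).+1)%N by rewrite ltn_divLR.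
lia.
Qed.

Lemma load_before_eq M N k f b j : (0 < M)%N -> (k <= N)%N -> (j <= (N - k).+1 * M)%N ->
  load_before (instI M N k) f b j =
  (\sum_(0 <= i < j | f i == b) 7 ^ (i %/ M))%:R / (7 ^ N)%:R.
Proof.
move=> hM hk hj; rewrite /load_before.
rewrite natr_sum mulr_suml.
rewrite big_nat_cond [RHS]big_nat_cond.
apply: eq_bigr => i /andP[/andP[_ hi] _].
have hi' : (i < (N - k).+1 * M)%N by apply: leq_trans hj.
exact: nth_instI hM hk hi'.
Qed.

Lemma lt1_nat (a n : nat) : (0 < n)%N -> (a%:R / n%:R < (1 : rat)) = (a < n)%N.
Proof.
move=> hn; rewrite ltr_pdivrMr ?ltr0n // mul1r ltr_nat //.
Qed.



Lemma Theta_eq N k : (k <= N)%N -> Theta N k = (S7 (N - k).+1)%:R / (7 ^ N)%:R.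
Proof.
move=> hk; rewrite /Theta.
have -> : \sum_(k <= i < N.+1) theta i = \sum_((0 + k)%N <= i < N.+1) theta i by [].
rewrite big_addn big_nat_rev /= add0n.
rewrite /S7 natr_sum mulr_suml.
have -> : (N.+1 - k = (N - k).+1)%N by rewrite subSn.
apply: eq_big_nat => i /andP[_ hi].
have -> : ((N - k).+1 - i.+1 + k = N - i)%N by lia.
apply: theta_eq; lia.
Qed.

Lemma den_eq N k : (k <= N)%N ->
  1 - theta N + theta k = (Yv N k)%:R / (7 ^ N)%:R.
Proof.
move=> hk.
have h1 : theta N = 1 / (7 ^ N)%:R by rewrite -(subn0 N) theta_eq // subn0 expn0.
have h2 : theta k = (7 ^ (N - k))%:R / (7 ^ N)%:R by rewrite -{1}(subKn hk) theta_eq // leq_subr.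
have hD : (7 ^ N)%:R != (0 : rat) by rewrite pnatr_eq0 -lt0n expn_gt0.
rewrite h1 h2 /Yv /A7 natrD natrB ?expn_gt0 //.
by field.
Qed.

Lemma total_units M N k : (0 < M)%N ->
  (\sum_(0 <= i < (N - k).+1 * M) 7 ^ (i %/ M) = M * S7 (N - k).+1)%N.
Proof.
move=> hM; rewrite sum_levels /S7 big_distrr /=.
apply: eq_big_nat => t /andP[_ ht].
transitivity (\sum_(0 <= r < M) 7 ^ t)%N.
  by apply: eq_big_nat => r /andP[_ hr]; have [-> _] := @dm_lvl M t r hM hr.
by rewrite sum_nat_const_nat subn0.
Qed.

Lemma per_bin_lower M N k f b : hyps M N k -> oe_packing (instI M N k) f ->
  b \in map f (iota 0 ((N - k).+1 * M)) ->
  (\sum_(0 <= i < (N - k).+1 * M | f i == b) 7 ^ (i %/ M) <= Yv N k)%N.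
Proof.
move=> H oe hb.
have hM := @hM M N k H; have hkN := @hkN M N k H.
set n := ((N - k).+1 * M)%N.
have exP : exists i, (i < n)%N && (f i == b).
  by case/mapP: hb => i; rewrite mem_iota add0n => /andP[_ hi] ->; exists i; rewrite hi eqxx.
have ubP : forall i, (i < n)%N && (f i == b) -> (i <= n)%N by move=> i /andP[/ltnW].
case: (ex_maxnP exP ubP) => j /andP[hj /eqP hfj] hmax.
rewrite (@big_cat_nat _ _ _ j.+1) //=.
have hz : (\sum_(j.+1 <= i < n | f i == b) 7 ^ (i %/ M) = 0)%N.
  rewrite big_nat_cond big1 // => i /andP[/andP[h1 h2] /eqP h3].
  have := hmax i; rewrite h2 h3 eqxx /= => /(_ isT); lia.
rewrite hz addn0 big_mkcond big_nat_recr //= hfj eqxx -big_mkcond /=.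
have hsz : size (instI M N k) = n by rewrite size_instI.
have hjs : (j < size (instI M N k))%N by rewrite hsz.
have hlb := oe j hjs.
have : load_before (instI M N k) f (f j) j < 1.
  apply: hlb => i hji hi; apply/negP => /eqP hfi.
  have := hmax i; rewrite -hsz hi hfi hfj eqxx /= => /(_ isT); lia.
rewrite load_before_eq //; last exact: ltnW.
rewrite lt1_nat ?expn_gt0 // hfj => hlt.
have : (j %/ M <= N - k)%N by rewrite -ltnS ltn_divLR.
rewrite /Yv /A7.
move=> hjM; have : (7 ^ (j %/ M) <= 7 ^ (N - k))%N by rewrite leq_exp2l.
lia.
Qed.

Theorem mainTheorem9 (M N : nat) :
  (3 <= M)%N -> (3 <= N)%N -> ((7 ^ N.+1)`! %| M)%N ->
  forall k : nat, (1 <= k)%N -> (k <= N)%N ->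
  exists m : nat, is_OPT (instI M N k) m /\
    (m%:R : rat) = M%:R * Theta N k / (1 - theta N + theta k).
Proof.
move=> hM3 hN3 hf k hk1 hkN.
have H := @hyps_of M N k hM3 hN3 hf hk1 hkN.
have [hc h7N hY hMp [f2 f3 f4 f7 f5]] := @facts M N k H.
have hM : (0 < M)%N by lia.
set n := ((N - k).+1 * M)%N.
have hsz : size (instI M N k) = n by rewrite size_instI.
have hBM : (Bv M N k <= M)%N by lia.
set bd := ((N - k) * M + (M - Bv M N k))%N.
have hnB : n = (bd + Bv M N k)%N by rewrite /n /bd mulSnr; lia.
have hII : index_iota 0 n = iota 0 n by rewrite /index_iota subn0.
exists (Bv M N k); split; last first.
  rewrite Theta_eq // den_eq //.
  have hD : (7 ^ N)%:R != (0 : rat) by rewrite pnatr_eq0 -lt0n expn_gt0.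
  have hY0 : (Yv N k)%:R != (0 : rat) by rewrite pnatr_eq0 -lt0n; lia.
  rewrite invf_div; apply: (mulIf hY0).
  have -> : (Bv M N k)%:R * (Yv N k)%:R = (M%:R * (S7 (N - k).+1)%:R : rat) by rewrite -!natrM f7.
  by field; apply/andP.
split.
- exists (fpack M N k); split.
  + move=> j; rewrite hsz => hj _.
    rewrite load_before_eq //; last exact: ltnW.
    rewrite lt1_nat ?expn_gt0 //.
    have hb := @bin_bound M N k (fpack M N k j) H.
    rewrite -/bd in hb.
    have h7 : (0 < 7 ^ N)%N by rewrite expn_gt0.
    suff : (\sum_(0 <= i < j | fpack M N k i == fpack M N k j) 7 ^ (i %/ M) <=
            \sum_(0 <= i < bd | fpack M N k i == fpack M N k j) 7 ^ (i %/ M))%N by lia.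
    case: (leqP j bd) => hjb.
      by rewrite [X in (_ <= X)%N](big_cat_nat (leq0n j) hjb) /= leq_addr.
    rewrite (big_cat_nat (leq0n bd) (ltnW hjb)) /=.
    rewrite [X in (_ + X)%N]big_nat_cond [X in (_ + X)%N]big1 ?addn0 //.
    move=> i /andP[/andP[h1 h2] /eqP h3].
    have hi : (bd <= i < (N - k).+1 * M)%N by apply/andP; split => //; lia.
    have hj' : (bd <= j < (N - k).+1 * M)%N by apply/andP; split; lia.
    move: h3; rewrite (@closer_f M N k i H hi) (@closer_f M N k j H hj'); lia.
  + rewrite /nbins hsz.
    have hp : perm_eq (undup (map (fpack M N k) (iota 0 n))) (iota 0 (Bv M N k)).
      apply: uniq_perm; [exact: undup_uniq | exact: iota_uniq |].
      move=> x; rewrite mem_undup mem_iota add0n; apply/mapP/idP.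
        case=> i; rewrite mem_iota add0n => /andP[_ hi] ->; exact: @labels_lt M N k i H hi.
      move=> hx; exists (bd + x)%N; first by rewrite mem_iota add0n; lia.
      have hi : (bd <= bd + x < (N - k).+1 * M)%N by apply/andP; split; lia.
      by rewrite (@closer_f M N k (bd + x) H hi); lia.
    by rewrite (perm_size hp) size_iota.
- move=> f oe; rewrite /nbins hsz.
  have tot := @total_units M N k hM.
  rewrite -/n hII in tot.
  rewrite (partition_sum f) in tot.
  set U := undup _ in tot *.
  have hle : (M * S7 (N - k).+1 <= size U * Yv N k)%N.
    rewrite -tot -sum1_size big_distrl /= big_seq [X in (_ <= X)%N]big_seq.
    apply: leq_sum => b hbU; rewrite mul1n.
    have := @per_bin_lower M N k f b H oe.
    rewrite -/n hII; apply; by rewrite mem_undup in hbU.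
  rewrite -f7 leq_pmul2r in hle => //; lia.
Qed.
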